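(* Let $\nu(x)=\sum_{k=0}^\infty\nu_kL_k(x)$ on $I=(-1,1)$, and for $m,n\ge2$ let $a^{(1)}_{m,n}:=\int_{-1}^1\nu(x)\,D\eta_m(x)\,D\eta_n(x)\,dx$. If there exist $\eta>0$ and a constant $C_\eta>0$ depending only on $\eta$ such that $|\nu_k|\le C_\eta e^{-\eta k}$ for all $k\ge0$, then $$|a^{(1)}_{m,n}|\le C e^{-\eta|n-m|}\qquad\forall\, n,m\ge2,$$ where $C$ is a constant depending only on $\eta$.
   Context: $I=(-1,1)$, $D=d/dx$. $L_k$ denotes the Legendre polynomial of degree $k$ normalized by $L_k(1)=1$, so $\int_I L_kL_m\,dx=\frac{2}{2k+1}\delta_{km}$. The Babuška–Shen basis is $\eta_k(x)=\sqrt{k-1/2}\int_x^1L_{k-1}(s)\,ds=\frac{1}{\sqrt{4k-2}}(L_{k-2}(x)-L_k(x))$, $k\ge2$; it satisfies $D\eta_k=-\sqrt{k-1/2}\,L_{k-1}$. *)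

(* Defs.v *)
From Stdlib Require Import Reals.
From Coquelicot Require Import Coquelicot.
Open Scope R_scope.

(* leg_pair n x = (L_n x, L_{n+1} x) via Bonnet's recurrence
   (k+1) L_{k+1} = (2k+1) x L_k - k L_{k-1}, L_0 = 1, L_1 = x. *)
Fixpoint leg_pair (n : nat) (x : R) : R * R :=
  match n with
  | O => (1, x)
  | S n' => let (p, q) := leg_pair n' x in
            (q, ((2 * INR n' + 3) * x * q - (INR n' + 1) * p) / (INR n' + 2))
  end.

Definition Legendre (k : nat) (x : R) : R := fst (leg_pair k x).

Definition eta_BS (k : nat) (x : R) : R :=
  sqrt (INR k - / 2) * RInt (Legendre (k - 1)) x 1.

Definition nu_fun (c : nat -> R) (x : R) : R :=
  Series (fun k => c k * Legendre k x).

Definition a1 (c : nat -> R) (m n : nat) : R :=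
  RInt (fun x => nu_fun c x * Derive (eta_BS m) x * Derive (eta_BS n) x) (-1) 1.

(* Main.v *)
Require Import Defs.
From Stdlib Require Import Reals.
From Coquelicot Require Import Coquelicot.
From Stdlib Require Import Lra Lia Psatz Arith Wf_nat.
Open Scope R_scope.


Lemma Leg0 x : Legendre 0 x = 1. Proof. reflexivity. Qed.
Lemma Leg1 x : Legendre 1 x = x. Proof. reflexivity. Qed.
Lemma Leg_snd n x : snd (leg_pair n x) = Legendre (S n) x.
Proof. unfold Legendre; simpl; destruct (leg_pair n x); reflexivity. Qed.
Lemma Leg_fst n x : fst (leg_pair n x) = Legendre n x.
Proof. reflexivity. Qed.
Lemma LegS2 n x : Legendre (S (S n)) x =
  ((2*INR n+3)*x*Legendre (S n) x - (INR n + 1)*Legendre n x)/(INR n+2).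
Proof.
  rewrite <- (Leg_snd (S n)). rewrite <- (Leg_snd n). rewrite <- Leg_fst.
  simpl. destruct (leg_pair n x) as [p q]. simpl. reflexivity.
Qed.
Lemma INRpos n : 0 <= INR n. Proof. apply pos_INR. Qed.
Lemma Bonnet n x : (INR n + 2) * Legendre (S (S n)) x =
  (2*INR n+3)*x*Legendre (S n) x - (INR n + 1)*Legendre n x.
Proof. rewrite LegS2. field. pose proof (INRpos n). lra. Qed.

Lemma nat_ind2 (P : nat -> Prop): P 0%nat -> P 1%nat ->
  (forall n, P n -> P (S n) -> P (S (S n))) -> forall n, P n.
Proof.
  intros H0 H1 HS n. assert (P n /\ P (S n)); [|tauto].
  induction n; [tauto|]. destruct IHn; split; auto.
Qed.

Fixpoint DL (n:nat) (x:R) : R := match n with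
  | O => 0 | S k => x * DL k x + INR (S k) * Legendre k x end.

Lemma DL_ids n x :
  x*DL (S n) x - DL n x = (INR n + 1) * Legendre (S n) x /\
  (1-x^2)*DL (S n) x = (INR n + 1) * (Legendre n x - x*Legendre (S n) x).
Proof.
  induction n.
  - simpl. unfold Legendre; simpl. split; ring.
  - destruct IHn as [H1 H2]. pose proof (Bonnet n x) as HB.
    change (DL (S (S n)) x) with (x * DL (S n) x + INR (S (S n)) * Legendre (S n) x).
    rewrite !S_INR. replace (INR n + 1 + 1) with (INR n + 2) by ring.
    set (D1 := DL (S n) x) in *. set (D0 := DL n x) in *.
    set (L2 := Legendre (S (S n)) x) in *. set (L1 := Legendre (S n) x) in *.
    set (L0 := Legendre n x) in *. split.
    + replace ((INR n + 2) * L2) with ((2 * INR n + 3) * x * L1 - (INR n + 1) * L0) by (rewrite HB; ring).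
      replace (x * (x * D1 + (INR n + 2) * L1) - D1) with ((x^2-1)*D1 + (INR n + 2) * x * L1) by ring.
      replace ((x^2-1)*D1) with (-((1 - x ^ 2) * D1)) by ring. rewrite H2. ring.
    + replace ((1 - x ^ 2) * (x * D1 + (INR n + 2) * L1)) with (x*((1 - x ^ 2) * D1) + (1 - x ^ 2) *(INR n + 2) * L1) by ring.
      rewrite H2. replace ((INR n + 2) * (L1 - x * L2)) with ((INR n + 2) * L1 - x * ((INR n + 2) * L2)) by ring.
      rewrite HB. ring.
Qed.


Lemma Leg_derive n x : is_derive (Legendre n) x (DL n x).
Proof.
  revert x. induction n using nat_ind2; intro x.
  - simpl. apply (is_derive_ext (fun _ => 1)). { intros; reflexivity. }
    auto_derive; [exact I|reflexivity].
  - apply (is_derive_ext (fun y => y)). { intros; reflexivity. }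
    replace (DL 1 x) with 1 by (simpl; unfold Legendre; simpl; ring).
    auto_derive; [exact I|ring].
  - apply (is_derive_ext (fun y => ((2*INR n+3)*y*Legendre (S n) y - (INR n + 1)*Legendre n y)/(INR n+2))).
    { intros; rewrite LegS2; reflexivity. }
    pose proof (IHn x) as H0. pose proof (IHn0 x) as H1.
    auto_derive.
    + split; [exists (DL (S n) x); exact H1|]. split; [exists (DL n x); exact H0|]. exact I.
    + replace (Derive (fun x0 : R => Legendre n x0) x) with (DL n x) by (symmetry; apply is_derive_unique; exact H0).
      replace (Derive (fun x0 : R => Legendre (S n) x0) x) with (DL (S n) x) by (symmetry; apply is_derive_unique; exact H1).
      destruct (DL_ids n x) as [E1 E2].
      change (DL (S (S n)) x) with (x * DL (S n) x + INR (S (S n)) * Legendre (S n) x).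
      rewrite !S_INR in *.
      replace (DL n x) with (x * DL (S n) x - (INR n + 1) * Legendre (S n) x) by lra.
      field. pose proof (INRpos n); lra.
Qed.


Definition Cts (f : R -> R) := forall x, continuous f x.
Lemma Cts_mult f g : Cts f -> Cts g -> Cts (fun x => f x * g x).
Proof. intros Hf Hg x. apply (continuous_mult f g); auto. Qed.
Lemma Cts_plus f g : Cts f -> Cts g -> Cts (fun x => f x + g x).
Proof. intros Hf Hg x. apply (continuous_plus f g); auto. Qed.
Lemma Cts_const c : Cts (fun _ => c).
Proof. intros x. apply continuous_const. Qed.
Lemma Cts_id : Cts (fun x => x).
Proof. intros x. apply continuous_id. Qed.
Lemma Cts_opp f : Cts f -> Cts (fun x => - f x).
Proof. intros Hf x. apply (continuous_opp f); auto. Qed.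
Lemma Cts_minus f g : Cts f -> Cts g -> Cts (fun x => f x - g x).
Proof. intros Hf Hg. apply Cts_plus; auto. apply Cts_opp; auto. Qed.
Lemma Cts_scal c f : Cts f -> Cts (fun x => c * f x).
Proof. intros. apply Cts_mult; auto using Cts_const. Qed.
Lemma Cts_pow j : Cts (fun x => x ^ j).
Proof. induction j; simpl. apply Cts_const. apply Cts_mult; auto using Cts_id. Qed.
Lemma Cts_Leg n : Cts (Legendre n).
Proof. intros x. apply (ex_derive_continuous (K:=R_AbsRing) (Legendre n)). exists (DL n x). apply Leg_derive. Qed.
Lemma Cts_DL n : Cts (DL n).
Proof. induction n; simpl. apply Cts_const. apply Cts_plus. apply Cts_mult; auto using Cts_id.
  apply Cts_scal, Cts_Leg. Qed.

Lemma Cts_ex f a b : Cts f -> ex_RInt f a b.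
Proof. intros H. apply (ex_RInt_continuous (V:=R_CompleteNormedModule)). intros; apply H. Qed.

Lemma RInt_add f g a b : Cts f -> Cts g ->
  RInt (fun x => f x + g x) a b = RInt f a b + RInt g a b.
Proof. intros Hf Hg. exact (RInt_plus f g a b (Cts_ex f a b Hf) (Cts_ex g a b Hg)). Qed.
Lemma RInt_sub f g a b : Cts f -> Cts g ->
  RInt (fun x => f x - g x) a b = RInt f a b - RInt g a b.
Proof. intros Hf Hg. exact (RInt_minus f g a b (Cts_ex f a b Hf) (Cts_ex g a b Hg)). Qed.
Lemma RInt_cmul c f a b : Cts f ->
  RInt (fun x => c * f x) a b = c * RInt f a b.
Proof. intros Hf. exact (RInt_scal f a b c (Cts_ex f a b Hf)). Qed.


Definition Imom (j b : nat) : R := RInt (fun x => x^j * Legendre b x) (-1) 1.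

Lemma DL_id3 b x : (1 - x^2) * DL b x = INR b * (Legendre (pred b) x - x * Legendre b x).
Proof. destruct b. simpl; ring. destruct (DL_ids b x) as [_ H]; rewrite S_INR; simpl pred; exact H. Qed.

Lemma powpred j x : INR j * x^(pred j) * (1-x^2) = INR j * x^(pred j) - INR j * x^(S j).
Proof. destruct j. simpl; ring. simpl pred. simpl. ring. Qed.

Lemma Cts_xL j b : Cts (fun x => x^j * Legendre b x).
Proof. apply Cts_mult. apply Cts_pow. apply Cts_Leg. Qed.

Lemma IBP j b : INR j * Imom (pred j) b - (INR j + 2 + INR b) * Imom (S j) b + INR b * Imom j (pred b) = 0.
Proof.
  set (df := fun x => INR j * x^(pred j) * (1-x^2) * Legendre b x + x^j * (-2*x) * Legendre b x
                      + x^j*((1-x^2)*DL b x)).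
  assert (H : is_RInt df (-1) 1 (minus ((fun x => x^j*(1-x^2)*Legendre b x) 1)
                                      ((fun x => x^j*(1-x^2)*Legendre b x) (-1)))).
  { apply (is_RInt_derive (V:=R_CompleteNormedModule) (fun x => x^j*(1-x^2)*Legendre b x)).
    - intros x _. pose proof (Leg_derive b x) as Hd. auto_derive.
      + exists (DL b x); exact Hd.
      + replace (Derive (fun x0 : R => Legendre b x0) x) with (DL b x) by (symmetry; apply is_derive_unique; exact Hd).
        unfold df. simpl. ring.
    - intros x _. revert x. unfold df. repeat apply Cts_plus; repeat apply Cts_mult;
      auto using Cts_pow, Cts_Leg, Cts_DL, Cts_const, Cts_id, Cts_minus. }
  apply (is_RInt_unique (V:=R_CompleteNormedModule)) in H.
  replace (minus ((fun x => x^j*(1-x^2)*Legendre b x) 1)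
                 ((fun x => x^j*(1-x^2)*Legendre b x) (-1))) with 0 in H
    by (simpl; unfold minus, plus, opp; simpl; ring).
  rewrite <- H. unfold Imom.
  rewrite (RInt_ext df (fun x => (INR j * (x^(pred j) * Legendre b x) - (INR j + 2 + INR b) * (x^(S j) * Legendre b x))
                                 + INR b * (x^j * Legendre (pred b) x))).
  2:{ intros x _. unfold df. rewrite DL_id3.
      replace (INR j * x ^ Init.Nat.pred j * (1 - x ^ 2) * Legendre b x) with
         ((INR j * x ^ Init.Nat.pred j * (1 - x ^ 2)) * Legendre b x) by ring.
      rewrite powpred. simpl. ring. }
  rewrite RInt_add, RInt_sub, !RInt_cmul; auto using Cts_xL.
  - apply Cts_scal, Cts_xL.
  - apply Cts_scal, Cts_xL.
  - apply Cts_minus; apply Cts_scal, Cts_xL.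
  - apply Cts_scal, Cts_xL.
Qed.

Lemma BonnetI n j : (INR n + 2) * Imom j (S (S n)) = (2*INR n+3) * Imom (S j) (S n) - (INR n + 1) * Imom j n.
Proof.
  unfold Imom. rewrite <- RInt_cmul by apply Cts_xL.
  rewrite (RInt_ext _ (fun x => (2*INR n+3) * (x^(S j) * Legendre (S n) x) - (INR n + 1) * (x^j * Legendre n x))).
  2:{ intros x _. replace ((INR n + 2) * (x ^ j * Legendre (S (S n)) x)) with
        (x^j * ((INR n + 2) * Legendre (S (S n)) x)) by ring. rewrite Bonnet. simpl. ring. }
  rewrite RInt_sub, !RInt_cmul; auto using Cts_xL; apply Cts_scal, Cts_xL.
Qed.

Lemma I_ext j b j' b' : (forall x, x^j * Legendre b x = x^j' * Legendre b' x) -> Imom j b = Imom j' b'.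
Proof. intros H. unfold Imom. apply RInt_ext. intros; apply H. Qed.

Lemma ortho b : forall j, (j < b)%nat -> Imom j b = 0.
Proof.
  induction b as [b IHb] using (well_founded_induction lt_wf).
  intro j. induction j as [j IHj] using (well_founded_induction lt_wf). intros Hjb.
  destruct j as [|j'].
  - destruct b as [|b']; [lia|]. destruct b' as [|c].
    + pose proof (IBP 0 0) as H. simpl in H.
      rewrite (I_ext 0 1 1 0). lra. intros; unfold Legendre; simpl; ring.
    + pose proof (BonnetI c 0) as H1. pose proof (IBP 0 (S c)) as H2.
      simpl pred in H2. rewrite S_INR in H2. simpl INR in H2.
      assert (Hc : INR c * Imom 0 c = 0).
      { destruct c as [|c']. simpl; ring. rewrite (IHb (S c')); [ring|lia|lia]. }
      pose proof (INRpos c).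
      assert (HI1 : (INR c + 3) * Imom 1 (S c) = (INR c + 1) * Imom 0 c) by lra.
      assert (E : (INR c + 2) * (INR c + 3) * Imom 0 (S (S c)) = (INR c + 1) * (INR c * Imom 0 c)).
      { replace ((INR c + 2) * (INR c + 3) * Imom 0 (S (S c))) with ((INR c + 3) * ((INR c + 2) * Imom 0 (S (S c)))) by ring.
        rewrite H1.
        replace ((INR c + 3) * ((2 * INR c + 3) * Imom 1 (S c) - (INR c + 1) * Imom 0 c)) with
          ((2 * INR c + 3) * ((INR c + 3) * Imom 1 (S c)) - (INR c + 3) * (INR c + 1) * Imom 0 c) by ring.
        rewrite HI1. ring. }
      rewrite Hc, Rmult_0_r in E.
      apply Rmult_integral in E. destruct E as [E|E]; [nra|exact E].
  - pose proof (IBP j' b) as H. destruct b as [|b']; [lia|]. simpl pred in H.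
    rewrite (IHb b') in H; [|lia|lia].
    assert (Hp : Imom (pred j') (S b') = 0) by (apply IHj; lia).
    rewrite Hp in H. pose proof (INRpos j'). pose proof (INRpos (S b')).
    apply (Rmult_eq_reg_l (INR j' + 2 + INR (S b'))); [|lra]. lra.
Qed.


Lemma RInt_extR (f g : R -> R) a b : (forall x, Rmin a b < x < Rmax a b -> f x = g x) ->
  RInt f a b = RInt g a b.
Proof. apply (RInt_ext (V:=R_CompleteNormedModule)). Qed.

Lemma ortho_gen (g : R -> R) (d B : nat) : Cts g ->
  (forall j, (j + d < B)%nat -> RInt (fun x => x^j * g x) (-1) 1 = 0) ->
  forall k j, (j + k + d < B)%nat -> RInt (fun x => x^j * (Legendre k x * g x)) (-1) 1 = 0.
Proof.
  intros Hg H k. induction k using nat_ind2; intros j Hj.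
  - rewrite <- (H j) by lia. apply RInt_extR. intros; rewrite Leg0; ring.
  - rewrite <- (H (S j)) by lia. apply RInt_extR. intros; rewrite Leg1; simpl; ring.
  - assert (Hc : forall k j, Cts (fun x => x^j * (Legendre k x * g x))).
    { intros. apply Cts_mult. apply Cts_pow. apply Cts_mult; auto using Cts_Leg. }
    pose proof (INRpos k).
    apply (Rmult_eq_reg_l (INR k + 2)); [|lra]. rewrite Rmult_0_r.
    rewrite <- RInt_cmul by apply Hc.
    rewrite (RInt_extR _ (fun x => (2*INR k+3) * (x^(S j) * (Legendre (S k) x * g x)) - (INR k + 1) * (x^j * (Legendre k x * g x)))).
    2:{ intros x _. replace ((INR k + 2) * (x ^ j * (Legendre (S (S k)) x * g x))) with
        (x^j * g x * ((INR k + 2) * Legendre (S (S k)) x)) by ring. rewrite Bonnet. simpl. ring. }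
    rewrite RInt_sub, !RInt_cmul; try apply Cts_scal; try apply Hc.
    rewrite IHk by lia. rewrite IHk0 by lia. ring.
Qed.

Lemma ortho2 k B : (k < B)%nat -> forall j, (j + k < B)%nat ->
  RInt (fun x => x^j * (Legendre k x * Legendre B x)) (-1) 1 = 0.
Proof.
  intros _ j Hj. apply (ortho_gen (Legendre B) 0 B (Cts_Leg B)); [|lia].
  intros j' Hj'. apply ortho. lia.
Qed.

Lemma ortho3 k a B : (k + a < B)%nat ->
  RInt (fun x => Legendre k x * (Legendre a x * Legendre B x)) (-1) 1 = 0.
Proof.
  intros Hk.
  rewrite <- (ortho_gen (fun x => Legendre a x * Legendre B x) a B) with (k:=k) (j:=0%nat).
  - apply RInt_extR; intros; simpl; ring.
  - apply Cts_mult; apply Cts_Leg.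
  - intros j Hj. apply (ortho_gen (Legendre B) 0 B (Cts_Leg B)); [|lia].
    intros j' Hj'. apply ortho. lia.
  - lia.
Qed.

Definition NL (n : nat) : R := RInt (fun x => Legendre n x * Legendre n x) (-1) 1.

Lemma ortho_pair k B : (k < B)%nat -> RInt (fun x => Legendre k x * Legendre B x) (-1) 1 = 0.
Proof. intros H. rewrite <- (ortho3 k 0 B) by lia. apply RInt_extR; intros; rewrite Leg0; ring. Qed.

Lemma Cts_LL a b : Cts (fun x => Legendre a x * Legendre b x).
Proof. apply Cts_mult; apply Cts_Leg. Qed.
Lemma Cts_xLL a b : Cts (fun x => x * (Legendre a x * Legendre b x)).
Proof. apply Cts_mult. apply Cts_id. apply Cts_LL. Qed.

Lemma norm_val n : NL n = 2 / (2 * INR n + 1).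
Proof.
  induction n using nat_ind2.
  - unfold NL. simpl. rewrite (RInt_extR _ (fun _ => 1)).
    2:{ intros; rewrite Leg0; ring. }
    rewrite RInt_const. unfold scal; simpl. unfold mult; simpl. field.
  - unfold NL. rewrite (RInt_extR _ (fun x => x^2)).
    2:{ intros; rewrite Leg1; ring. }
    rewrite (is_RInt_unique (V:=R_CompleteNormedModule) (fun x => x^2) (-1) 1 (2/3)).
    + simpl. field.
    + replace (2/3) with (minus ((fun x => x^3/3) 1) ((fun x => x^3/3) (-1))).
      2:{ unfold minus, plus, opp; simpl. field. }
      apply (is_RInt_derive (V:=R_CompleteNormedModule) (fun x => x^3/3)).
      * intros x _. auto_derive; [exact I|]. simpl; field.
      * intros x _. apply Cts_pow.
  -
    set (X := (RInt (fun x => x * (Legendre (S n) x * Legendre (S (S n)) x)) (-1) 1 : R)).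
    pose proof (INRpos n) as Hn.
    (* (n+2) NL(n+2) = (2n+3) X - (n+1) * int L_n L_{n+2} *)
    assert (E1 : (INR n + 2) * NL (S (S n)) = (2*INR n+3) * X).
    { unfold NL. rewrite <- RInt_cmul by apply Cts_LL.
      rewrite (RInt_extR _ (fun x => (2*INR n+3) * (x * (Legendre (S n) x * Legendre (S (S n)) x)) - (INR n + 1) * (Legendre n x * Legendre (S (S n)) x))).
      2:{ intros x _. replace ((INR n + 2) * (Legendre (S (S n)) x * Legendre (S (S n)) x)) with
          (Legendre (S (S n)) x * ((INR n + 2) * Legendre (S (S n)) x)) by ring. rewrite Bonnet. ring. }
      rewrite RInt_sub, !RInt_cmul; try apply Cts_scal; try apply Cts_LL; try apply Cts_xLL.
      rewrite ortho_pair by lia. unfold X. ring. }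
    (* (n+3) int L_{n+3} L_{n+1} = 0 = (2n+5) X - (n+2) NL(n+1) *)
    assert (E2 : (2*INR n+5) * X = (INR n + 2) * NL (S n)).
    { assert (Z : @eq R (RInt (fun x => (INR (S n) + 2) * (Legendre (S (S (S n))) x * Legendre (S n) x)) (-1) 1) 0).
      { rewrite RInt_cmul by apply Cts_LL. rewrite (RInt_extR _ (fun x => Legendre (S n) x * Legendre (S (S (S n))) x)).
        rewrite ortho_pair by lia. ring. intros; ring. }
      rewrite (RInt_extR _ (fun x => (2*INR (S n)+3) * (x * (Legendre (S n) x * Legendre (S (S n)) x)) - (INR (S n) + 1) * (Legendre (S n) x * Legendre (S n) x))) in Z.
      2:{ intros x _. replace ((INR (S n) + 2) * (Legendre (S (S (S n))) x * Legendre (S n) x)) with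
          (Legendre (S n) x * ((INR (S n) + 2) * Legendre (S (S (S n))) x)) by ring. rewrite Bonnet. ring. }
      rewrite RInt_sub, !RInt_cmul in Z; try apply Cts_scal; try apply Cts_LL; try apply Cts_xLL.
      fold X in Z. unfold NL. rewrite S_INR in Z. lra. }
    rewrite IHn0 in E2. rewrite S_INR in E2.
    rewrite !S_INR.
    apply (Rmult_eq_reg_l ((INR n + 2) * (2*INR n + 5))); [|nra].
    rewrite (Rmult_comm (INR n + 2)) at 1. rewrite Rmult_assoc, E1.
    replace ((2 * INR n + 5) * ((2 * INR n + 3) * X)) with ((2 * INR n + 3) * ((2 * INR n + 5) * X)) by ring.
    rewrite E2. field. lra.
Qed.


Definition Sq n x := Legendre n x ^ 2 + Legendre (S n) x ^ 2 - 2 * x * Legendre n x * Legendre (S n) x.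

Lemma Sq_dec n x : Sq (S n) x <= Sq n x.
Proof.
  assert (E : Sq n x - Sq (S n) x = (2*INR n+3)/(INR n+2)^2 * (Legendre n x - x * Legendre (S n) x)^2).
  { unfold Sq. rewrite LegS2. field. pose proof (INRpos n); lra. }
  assert (0 <= (2*INR n+3)/(INR n+2)^2 * (Legendre n x - x * Legendre (S n) x)^2).
  { pose proof (INRpos n). apply Rmult_le_pos. apply Rdiv_le_0_compat. lra. apply pow_lt; lra. apply pow2_ge_0. }
  lra.
Qed.

Lemma Sq_le n x : Sq n x <= 1 - x^2.
Proof.
  induction n. unfold Sq; rewrite Leg0, Leg1; lra.
  pose proof (Sq_dec n x); lra.
Qed.

Lemma Leg_edge n x : x^2 = 1 -> Legendre (S n) x = x * Legendre n x /\ Legendre n x ^2 = 1.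
Proof.
  intros Hx. induction n.
  - rewrite Leg0, Leg1. lra.
  - destruct IHn as [H1 H2]. rewrite LegS2, H1. split.
    + field_simplify; [|pose proof (INRpos n); lra]. 
      replace (x^2) with 1 by lra. field. pose proof (INRpos n); lra.
    + replace ((x * Legendre n x) ^ 2) with (x^2 * Legendre n x ^2) by ring. rewrite Hx, H2; ring.
Qed.

Lemma Leg_bound n x : -1 <= x <= 1 -> Rabs (Legendre n x) <= 1.
Proof.
  intros Hx. assert (Legendre n x ^ 2 <= 1).
  { destruct (Req_dec (x^2) 1) as [E|E].
    - destruct (Leg_edge n x E); lra.
    - assert (0 < 1 - x^2) by nra.
      pose proof (Sq_le n x). unfold Sq in H0. pose proof (pow2_ge_0 (Legendre (S n) x - x*Legendre n x)).
      assert (HH : (1-x^2) * Legendre n x ^ 2 <= (1 - x^2) * 1) by nra.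
      apply Rmult_le_reg_l in HH; lra. }
  apply Rabs_le. nra.
Qed.


Lemma exp_q eta k : exp (- eta * INR k) = (exp (- eta)) ^ k.
Proof.
  induction k. simpl. rewrite Rmult_0_r, exp_0; ring.
  rewrite S_INR. replace (- eta * (INR k + 1)) with (- eta * INR k + - eta) by ring.
  rewrite exp_plus, IHk. simpl. ring.
Qed.

Fixpoint psum (c : nat -> R) (N : nat) (x : R) : R := match N with
  | O => 0 | S k => psum c k x + c k * Legendre k x end.

Lemma psum_sum c N x : psum c (S N) x = sum_f_R0 (fun k => c k * Legendre k x) N.
Proof. induction N. simpl; ring. change (psum c (S (S N)) x) with (psum c (S N) x + c (S N) * Legendre (S N) x).
  rewrite IHN. reflexivity. Qed.

Lemma Cts_psum c N : Cts (psum c N).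
Proof. induction N; simpl. apply Cts_const. apply Cts_plus; auto. apply Cts_scal, Cts_Leg. Qed.

Section Tail.
Variables (q Ceta : R) (c : nat -> R).
Hypothesis Hq : 0 < q < 1.
Hypothesis HC : 0 < Ceta.
Hypothesis Hc : forall k, Rabs (c k) <= Ceta * q ^ k.

Lemma geom_is N : is_series (fun k => Ceta * q^N * q^k) (Ceta * q^N / (1 - q)).
Proof.
  unfold Rdiv. apply (is_series_scal_l (Ceta * q^N) (fun k => q^k) (/ (1-q))).
  apply is_series_geom. rewrite Rabs_right; lra.
Qed.

Lemma term_bound x k : -1 <= x <= 1 -> Rabs (c k * Legendre k x) <= Ceta * q ^ k.
Proof.
  intros Hx. rewrite Rabs_mult. pose proof (Leg_bound k x Hx). pose proof (Hc k).
  pose proof (Rabs_pos (c k)). pose proof (Rabs_pos (Legendre k x)). nra.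
Qed.

Lemma tail_bound x N : -1 <= x <= 1 ->
  Rabs (nu_fun c x - psum c N x) <= Ceta * q^N / (1 - q).
Proof.
  intros Hx. unfold nu_fun.
  set (a := fun k => c k * Legendre k x).
  assert (Ha : ex_series (fun k => Rabs (a k))).
  { apply (ex_series_le (K:=R_AbsRing) (V:=R_CompleteNormedModule) _ (fun k => Ceta * q^0 * q^k)).
    - intros k. change (norm (Rabs (a k))) with (Rabs (Rabs (a k))). rewrite Rabs_Rabsolu.
      unfold a. simpl. rewrite Rmult_1_r. apply term_bound; auto.
    - eexists. apply geom_is. }
  assert (Hsh : Rabs (Series (fun k => a (N + k)%nat)) <= Ceta * q^N / (1 - q)).
  { eapply Rle_trans. apply Series_Rabs.
    - apply (ex_series_le (K:=R_AbsRing) (V:=R_CompleteNormedModule) _ (fun k => Ceta * q^N * q^k)).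
      + intros k. change (norm (Rabs (a (N+k)%nat))) with (Rabs (Rabs (a (N+k)%nat))). rewrite Rabs_Rabsolu.
        unfold a. replace (Ceta * q ^ N * q ^ k) with (Ceta * q^(N+k)) by (rewrite pow_add; ring). apply term_bound; auto.
      + eexists. apply geom_is.
    - rewrite <- (is_series_unique _ _ (geom_is N)). apply Series_le.
      + intros k. split. apply Rabs_pos. unfold a. replace (Ceta * q ^ N * q ^ k) with (Ceta * q^(N+k)) by (rewrite pow_add; ring). apply term_bound; auto.
      + eexists. apply geom_is. }
  destruct N as [|N'].
  - simpl. rewrite Rminus_0_r. replace (Series a) with (Series (fun k => a (0 + k)%nat)). exact Hsh.
    apply Series_ext. intros; reflexivity.
  - rewrite (Series_incr_n a (S N')) by (lia || apply ex_series_Rabs, Ha).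
    simpl pred. rewrite psum_sum. fold a.
    replace (sum_f_R0 a N' + Series (fun k : nat => a (S N' + k)%nat) - sum_f_R0 a N')
      with (Series (fun k : nat => a (S N' + k)%nat)) by ring. exact Hsh.
Qed.
End Tail.


Definition clamp (y : R) := (Rabs (y+1) - Rabs (y-1))/2.
Lemma clamp_in y : -1 <= clamp y <= 1.
Proof. unfold clamp. unfold Rabs; repeat destruct Rcase_abs; lra. Qed.
Lemma clamp_id y : -1 <= y <= 1 -> clamp y = y.
Proof. intros H. unfold clamp. unfold Rabs; repeat destruct Rcase_abs; lra. Qed.
Lemma Cts_clamp : Cts clamp.
Proof.
  unfold clamp. intros x.
  apply (Cts_mult (fun y => Rabs (y+1) - Rabs (y-1)) (fun _ => /2)); [|apply Cts_const].
  apply Cts_minus; intros y; apply continuous_Rabs_comp;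
  [apply (Cts_plus (fun y => y) (fun _ => 1))|apply (Cts_minus (fun y => y) (fun _ => 1))];
  auto using Cts_id, Cts_const.
Qed.

Section Cont.
Variables (q Ceta : R) (c : nat -> R).
Hypothesis Hq : 0 < q < 1.
Hypothesis HC : 0 < Ceta.
Hypothesis Hc : forall k, Rabs (c k) <= Ceta * q ^ k.

Lemma nu_cont y : Rabs y < 2 -> continuous (fun y => nu_fun c (clamp y)) y.
Proof.
  intros Hy. apply continuity_pt_filterlim.
  apply (CVU_continuity (fun n y => psum c n (clamp y)) (fun y => nu_fun c (clamp y)) 0 (mkposreal 2 ltac:(lra))).
  - intros eps Heps.
    assert (He : 0 < eps * (1 - q) / Ceta) by (apply Rdiv_lt_0_compat; nra).
    destruct (pow_lt_1_zero q ltac:(rewrite Rabs_right; lra) _ He) as [N HN].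
    exists N. intros n y' Hn _.
    eapply Rle_lt_trans. apply (tail_bound q Ceta c Hq Hc). apply clamp_in.
    specialize (HN n Hn). rewrite Rabs_right in HN by (apply Rle_ge, pow_le; lra).
    apply (Rmult_lt_reg_r (1 - q)); [lra|]. unfold Rdiv. rewrite Rmult_assoc, Rinv_l, Rmult_1_r by lra.
    apply (Rmult_lt_reg_r (/ Ceta)); [apply Rinv_0_lt_compat; lra|].
    replace (Ceta * q ^ n * / Ceta) with (q^n) by (field; lra). exact HN.
  - intros n y' _. apply continuity_pt_filterlim.
    apply (continuous_comp clamp (psum c n)). apply Cts_clamp. apply Cts_psum.
  - unfold Boule. rewrite Rminus_0_r. exact Hy.
Qed.
End Cont.


Ltac cts := repeat (first [apply Cts_Leg | apply Cts_psum | apply Cts_DL | apply Cts_pow | apply Cts_const | apply Cts_id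
  | apply Cts_LL | apply Cts_plus | apply Cts_minus | apply Cts_mult]).

Lemma Deta m x : Derive (eta_BS m) x = sqrt (INR m - /2) * (- Legendre (m-1) x).
Proof.
  apply is_derive_unique. unfold eta_BS.
  apply (is_derive_scal (fun y => RInt (Legendre (m-1)) y 1)).
  apply (is_derive_RInt' (V:=R_CompleteNormedModule) (Legendre (m-1)) (fun y => RInt (Legendre (m-1)) y 1) x 1).
  - apply filter_forall. intros y. apply (RInt_correct (V:=R_CompleteNormedModule)). apply Cts_ex, Cts_Leg.
  - apply Cts_Leg.
Qed.

Lemma psum_ortho c a b N : (forall k, (k < N)%nat -> RInt (fun x => Legendre k x * (Legendre a x * Legendre b x)) (-1) 1 = 0) ->
  RInt (fun x => psum c N x * (Legendre a x * Legendre b x)) (-1) 1 = 0.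
Proof.
  induction N; intros Hk.
  - simpl. rewrite (RInt_cmul 0 (fun x => Legendre a x * Legendre b x)) by apply Cts_LL. ring.
  - simpl. rewrite (RInt_extR _ (fun x => psum c N x * (Legendre a x * Legendre b x) + c N * (Legendre N x * (Legendre a x * Legendre b x)))).
    2:{ intros; ring. }
    rewrite RInt_add, RInt_cmul, IHN, Hk; try lia; try ring; auto; cts.
Qed.

Lemma cont_m (f g : R -> R) z : continuous f z -> continuous g z -> continuous (fun x => f x * g x) z.
Proof. intros. apply (continuous_mult f g); auto. Qed.
Lemma cont_s (f g : R -> R) z : continuous f z -> continuous g z -> continuous (fun x => f x - g x) z.
Proof. intros. apply (continuous_minus f g); auto. Qed.

Lemma key q Ceta c a b d sA sB : 0 < q < 1 -> 0 < Ceta -> (forall k, Rabs (c k) <= Ceta * q ^ k) ->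
  sA^2 * NL a = 1 -> sB^2 * NL b = 1 ->
  (forall k, (k < d)%nat -> RInt (fun x => Legendre k x * (Legendre a x * Legendre b x)) (-1) 1 = 0) ->
  Rabs (RInt (fun x => nu_fun c (clamp x) * (sA * Legendre a x) * (sB * Legendre b x)) (-1) 1)
    <= Ceta * q^d / (1 - q).
Proof.
  intros Hq HC Hc HA HB Ho.
  set (f := fun x => nu_fun c (clamp x)).
  set (M := Ceta * q^d / (1 - q)).
  assert (Hfc : forall z, -1 <= z <= 1 -> continuous f z).
  { intros z Hz. apply (nu_cont q Ceta c Hq HC Hc). apply Rabs_def1; lra. }
  set (g := fun x => (f x - psum c d x) * (sA * Legendre a x) * (sB * Legendre b x)).
  assert (Hgc : forall z, -1 <= z <= 1 -> continuous g z).
  { intros z Hz. unfold g. apply cont_m; [apply cont_m|].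
    apply cont_s. apply Hfc; auto. apply Cts_psum. apply Cts_scal, Cts_Leg. apply Cts_scal, Cts_Leg. }
  assert (Hg : ex_RInt g (-1) 1).
  { apply (ex_RInt_continuous (V:=R_CompleteNormedModule)). intros z Hz.
    rewrite Rmin_left, Rmax_right in Hz by lra. apply Hgc; auto. }
  set (p := fun x => psum c d x * (sA * Legendre a x) * (sB * Legendre b x)).
  assert (Hpc : Cts p) by (unfold p; cts; apply Cts_scal; cts).
  assert (E : @eq R (RInt (fun x => nu_fun c (clamp x) * (sA * Legendre a x) * (sB * Legendre b x)) (-1) 1) (RInt g (-1) 1 + RInt p (-1) 1)).
  { rewrite (RInt_extR _ (fun x => g x + p x)).
    exact (RInt_plus (V:=R_CompleteNormedModule) g p (-1) 1 Hg (Cts_ex _ _ _ Hpc)).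
    intros x _. unfold g, p, f. ring. }
  assert (Ep : @eq R (RInt p (-1) 1) 0).
  { unfold p. rewrite (RInt_extR _ (fun x => (sA * sB) * (psum c d x * (Legendre a x * Legendre b x)))).
    rewrite RInt_cmul, psum_ortho; auto. ring. cts. intros; ring. }
  rewrite E, Ep, Rplus_0_r.
  eapply Rle_trans. apply abs_RInt_le; [lra|exact Hg].
  apply Rle_trans with (RInt (fun x => M * ((sA^2) * (Legendre a x * Legendre a x)) / 2 + M * ((sB^2) * (Legendre b x * Legendre b x)) / 2) (-1) 1).
  - apply RInt_le. lra.
    + apply (ex_RInt_continuous (V:=R_CompleteNormedModule)). intros z Hz.
      rewrite Rmin_left, Rmax_right in Hz by lra. apply continuous_Rabs_comp. apply Hgc; auto.
    + apply Cts_ex. apply Cts_plus; apply Cts_mult; try apply Cts_const; apply Cts_scal; apply Cts_scal; apply Cts_LL.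
    + intros x Hx. unfold g.
      assert (Ht : Rabs (f x - psum c d x) <= M).
      { unfold f. rewrite clamp_id by lra. apply tail_bound; auto. lra. }
      assert (HM : 0 <= M).
      { unfold M. apply Rdiv_le_0_compat. apply Rmult_le_pos. lra. apply pow_le; lra. lra. }
      set (u := Rabs (sA * Legendre a x)). set (v := Rabs (sB * Legendre b x)).
      assert (Hu : u^2 = sA^2 * (Legendre a x * Legendre a x)) by (unfold u; rewrite pow2_abs; ring).
      assert (Hv : v^2 = sB^2 * (Legendre b x * Legendre b x)) by (unfold v; rewrite pow2_abs; ring).
      rewrite <- Hu, <- Hv.
      assert (0 <= u) by apply Rabs_pos. assert (0 <= v) by apply Rabs_pos.
      assert (Huv : u * v <= (u^2 + v^2)/2) by (pose proof (pow2_ge_0 (u - v)); nra).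
      pose proof (Rabs_pos (f x - psum c d x)).
      assert (Rabs (f x - psum c d x) * (u * v) <= M * (u * v)) by (apply Rmult_le_compat_r; [apply Rmult_le_pos|]; lra).
      assert (M * (u * v) <= M * ((u^2 + v^2)/2)) by (apply Rmult_le_compat_l; lra).
      replace (Rabs ((f x - psum c d x) * (sA * Legendre a x) * (sB * Legendre b x))) with
        (Rabs (f x - psum c d x) * (u * v)) by (unfold u, v; rewrite !Rabs_mult; ring).
      lra.
  - rewrite (RInt_extR _ (fun x => (M * sA^2 / 2) * (Legendre a x * Legendre a x) + (M * sB^2 / 2) * (Legendre b x * Legendre b x))).
    2:{ intros; field. }
    rewrite RInt_add, !RInt_cmul; try (apply Cts_scal; apply Cts_LL); try apply Cts_LL.
    unfold NL in HA, HB.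
    assert (T : forall Ia Ib : R, sA^2*Ia = 1 -> sB^2*Ib = 1 -> M*sA^2/2*Ia + M*sB^2/2*Ib <= M).
    { intros Ia Ib H1 H2. replace (M*sA^2/2*Ia + M*sB^2/2*Ib) with (M/2*(sA^2*Ia) + M/2*(sB^2*Ib)) by field.
      rewrite H1, H2. lra. }
    apply T; assumption.
Qed.

Lemma sA_prop m : (1 <= m)%nat -> sqrt (INR m - /2) ^ 2 * NL (m - 1) = 1.
Proof.
  intros Hm. rewrite norm_val. rewrite minus_INR by lia. simpl INR.
  assert (1 <= INR m) by (apply (le_INR 1); lia).
  rewrite <- Rsqr_pow2, Rsqr_sqrt by lra. field. lra.
Qed.

Lemma main_case q Ceta c m n d : 0 < q < 1 -> 0 < Ceta -> (forall k, Rabs (c k) <= Ceta * q ^ k) ->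
  (1 <= m)%nat -> (1 <= n)%nat ->
  (forall k, (k < d)%nat -> RInt (fun x => Legendre k x * (Legendre (m-1) x * Legendre (n-1) x)) (-1) 1 = 0) ->
  Rabs (a1 c m n) <= Ceta * q^d / (1 - q).
Proof.
  intros Hq HC Hc Hm Hn Ho.
  unfold a1.
  rewrite (RInt_extR _ (fun x => nu_fun c (clamp x) * (sqrt (INR m - /2) * Legendre (m-1) x) * (sqrt (INR n - /2) * Legendre (n-1) x))).
  - apply key; auto; apply sA_prop; auto.
  - intros x Hx. rewrite Rmin_left, Rmax_right in Hx by lra.
    rewrite !Deta, clamp_id by lra. ring.
Qed.

Theorem mainTheorem2 :
  forall (eta : R), 0 < eta ->
  forall (Ceta : R), 0 < Ceta ->
  exists C : R, 0 < C /\
    forall c : nat -> R,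
      (forall k : nat, Rabs (c k) <= Ceta * exp (- eta * INR k)) ->
      forall m n : nat, (2 <= m)%nat -> (2 <= n)%nat ->
        Rabs (a1 c m n) <= C * exp (- eta * Rabs (INR n - INR m)).
Proof.
  intros eta Heta Ceta HC.
  set (q := exp (- eta)).
  assert (Hq : 0 < q < 1).
  { split. apply exp_pos. unfold q. rewrite <- exp_0. apply exp_increasing. lra. }
  exists (Ceta / (1 - q)). split. apply Rdiv_lt_0_compat; lra.
  intros c Hc m n Hm Hn.
  assert (Hc' : forall k, Rabs (c k) <= Ceta * q ^ k) by (intros k; unfold q; rewrite <- exp_q; apply Hc).
  destruct (le_lt_dec m n) as [Hmn|Hmn].
  - replace (Rabs (INR n - INR m)) with (INR (n - m)).
    2:{ rewrite minus_INR by lia. rewrite Rabs_right; auto. apply Rle_ge. pose proof (le_INR m n ltac:(lia)); lra. }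
    rewrite exp_q. fold q.
    replace (Ceta / (1 - q) * q ^ (n - m)) with (Ceta * q ^ (n - m) / (1 - q)) by (field; lra).
    apply main_case; auto; try lia.
    intros k Hk. apply ortho3. lia.
  - replace (Rabs (INR n - INR m)) with (INR (m - n)).
    2:{ rewrite minus_INR by lia. rewrite <- Rabs_Ropp, Rabs_right. ring. apply Rle_ge.
        pose proof (le_INR n m ltac:(lia)); lra. }
    rewrite exp_q. fold q.
    replace (Ceta / (1 - q) * q ^ (m - n)) with (Ceta * q ^ (m - n) / (1 - q)) by (field; lra).
    apply main_case; auto; try lia.
    intros k Hk. rewrite <- (ortho3 k (n-1) (m-1)) by lia. apply RInt_extR. intros; ring.
Qed.
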